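(* Let $\mathbb{F}_q$ be a finite field, $e\ge1$, and let $t\ge 2$ be an integer. Let $a\in\mathbb{F}_{q^e}^*$ have multiplicative order $o_a\ge t$. Let $f_{a,t}\in\mathbb{F}_q[x]$ be the product of the distinct polynomials among the minimal polynomials over $\mathbb{F}_q$ of $a^0,a^1,\dots,a^{t-1}$. Then the least-degree $t$-sparse multiple of $f_{a,t}$ in $\mathbb{F}_q[x]$ is $x^{o_a}-1$; that is, $f_{a,t}$ divides $x^{o_a}-1$, and every nonzero $t$-sparse multiple of $f_{a,t}$ in $\mathbb{F}_q[x]$ has degree at least $o_a$.
   Context: A polynomial is $t$-sparse if it has at most $t$ nonzero coefficients in the power basis. The multiplicative order of $a$ is the least positive integer $m$ with $a^m=1$. *)

(* Defs.v *)
From HB Require Import structures.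
From mathcomp Require Import all_boot all_order all_algebra falgebra fieldext finfield.
Set Implicit Arguments. Unset Strict Implicit. Unset Printing Implicit Defensive.
Import GRing.Theory.
Local Open Scope ring_scope.

Definition sparse (R : nzRingType) (t : nat) (p : {poly R}) : bool :=
  (count (fun c : R => c != 0%R) (polyseq p) <= t)%N.

Definition f_at (F : fieldType) (L : fieldExtType F) (a : L) (t : nat) : {poly L} :=
  \prod_(p <- undup [seq minPoly 1%VS (a ^+ i) | i <- iota 0 t]) p.

(* Main.v *)
Require Import Defs.
From HB Require Import structures.
From mathcomp Require Import all_boot all_order all_algebra falgebra fieldext finfield.
Import GRing.Theory.
Local Open Scope ring_scope.

Section P1.
Variables (F : fieldType) (L : fieldExtType F).

Definition isMP (p : {poly L}) := exists x, p = minPoly 1%VS x.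

Lemma mp_cop p q : isMP p -> isMP q -> p != q -> coprimep p q.
Proof.
move=> [x ->] [y ->] neq.
have Kd : gcdp (minPoly 1 x) (minPoly 1 y) \is a polyOver 1%VS.
  by rewrite gcdp_polyOver ?minPolyOver.
have /orP[dp|d1] := minPoly_irr Kd (dvdp_gcdl _ _); last first.
  by rewrite coprimep_def (eqp_size d1) size_poly1.
have pq : minPoly 1 x %| minPoly 1 y by rewrite -(eqp_dvdl _ dp) dvdp_gcdr.
have /orP[e|e1] := minPoly_irr (minPolyOver 1 x) pq.
  by rewrite eqp_monic ?monic_minPoly // (negPf neq) in e.
by move: (root_minPoly 1 x); rewrite (eqp_root e1) (negPf (root1 _)).
Qed.

Lemma cop_prod p l : isMP p -> (forall q, q \in l -> isMP q) -> p \notin l ->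
  coprimep p (\prod_(q <- l) q).
Proof.
move=> Hp; elim: l => [|q l IH] Hl; first by rewrite big_nil coprimep1.
rewrite in_cons negb_or => /andP[pq pl].
rewrite big_cons coprimepMr mp_cop //; last by apply: Hl; rewrite mem_head.
by apply: IH => // r rl; apply: Hl; rewrite in_cons rl orbT.
Qed.

Lemma prod_dvd l h : uniq l -> (forall q, q \in l -> isMP q /\ q %| h) ->
  \prod_(q <- l) q %| h.
Proof.
elim: l => [|q l IH] /=; first by rewrite big_nil dvd1p.
move=> /andP[ql ul] Hl; rewrite big_cons Gauss_dvdp.
  rewrite (proj2 (Hl q (mem_head _ _))) IH // => r rl.
  by apply: Hl; rewrite in_cons rl orbT.
apply: cop_prod => //; first exact: (proj1 (Hl q (mem_head _ _))).
by move=> r rl; apply: (proj1 (Hl r _)); rewrite in_cons rl orbT.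
Qed.
End P1.
Lemma dvd_mem (R : idomainType) (q : {poly R}) l : q \in l -> q %| \prod_(p <- l) p.
Proof.
elim: l => [|p l IH] //; rewrite in_cons big_cons => /orP[/eqP->|ql].
  exact: dvdp_mulIl.
by apply: dvdp_mull; apply: IH.
Qed.

Lemma count_nz (R : nzRingType) (g : {poly R}) :
  count (fun c : R => c != 0) g = count (fun j => g`_j != 0) (iota 0%N (size g)).
Proof.
rewrite -{1}(mkseq_nth 0 g) /mkseq count_map; exact: eq_count.
Qed.

Lemma part2 (F : fieldType) (L : fieldExtType F) (t : nat) (a : L) (o : nat)
  (ha : a != 0)
  (ho_min : forall m : nat, (0 < m)%N -> (m < o)%N -> a ^+ m != 1)
  (g : {poly L}) : g != 0 -> (forall i, (i < t)%N -> g.[a ^+ i] = 0) ->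
    (count (fun c : L => c != 0%R) g <= t)%N -> (o <= (size g).-1)%N.
Proof.
move=> g0 groot sp; rewrite leqNgt; apply/negP => lt_m_o.
set n := size g; set m := n.-1.
have n_eq : n = (m + 1)%N by rewrite addn1 prednK // lt0n size_poly_eq0.
set s := [seq j <- iota 0%N m | g`_j != 0].
set P := \prod_(b <- [seq a ^+ k | k <- s]) ('X - b%:P).
have szP : (size P <= t)%N.
  rewrite size_prod_XsubC size_map size_filter.
  move: sp; rewrite count_nz -/n n_eq iotaD count_cat /= add0n.
  have -> : g`_m != 0 by rewrite -lead_coefE lead_coef_eq0.
  by rewrite addn0 addn1.
have inj : forall k, (k < m)%N -> a ^+ m != a ^+ k.
  move=> k km; apply/eqP => e.
  have : a ^+ (m - k) == 1.
    apply/eqP; apply: (mulfI (expf_neq0 k ha)).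
    by rewrite -exprD subnKC ?(ltnW km) // mulr1.
  by apply/negP; apply: ho_min; rewrite ?subn_gt0 // (leq_ltn_trans (leq_subr _ _)).
have key : \sum_(i < t) P`_i * g.[a ^+ i] = \sum_(j < n) g`_j * P.[a ^+ j].
  apply/esym; under eq_bigr => j _ do rewrite (horner_coef_wide _ szP) big_distrr.
  rewrite exchange_big /=; apply: eq_bigr => i _.
  rewrite horner_coef big_distrr; apply: eq_bigr => j _ /=.
  by rewrite mulrCA -!exprM mulnC.
have lhs0 : \sum_(i < t) P`_i * g.[a ^+ i] = 0.
  by rewrite big1 // => i _; rewrite groot // mulr0.
move: key; rewrite lhs0 n_eq addn1 big_ord_recr /= big1 ?add0r; last first.
  move=> j _; have [->|nz] := eqVneq g`_j 0; first by rewrite mul0r.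
  apply/eqP; rewrite mulf_eq0; apply/orP; right; apply/eqP/rootP.
  rewrite root_prod_XsubC; apply: map_f.
  by rewrite mem_filter nz mem_iota /=.
move=> /esym /eqP; rewrite mulf_eq0 => /orP[].
  by rewrite -lead_coefE lead_coef_eq0 (negPf g0).
move=> /eqP/rootP; rewrite root_prod_XsubC.
move=> /mapP [k]; rewrite mem_filter mem_iota /= => /andP[_ km] /eqP.
by apply/negP; apply: inj.
Qed.

Theorem theorem5p1 (F : finFieldType) (L : fieldExtType F) (t : nat) (a : L) (o : nat)
  (ht : (2 <= t)%N) (ha : a != 0)
  (ho_pos : (0 < o)%N) (ho : a ^+ o = 1)
  (ho_min : forall m : nat, (0 < m)%N -> (m < o)%N -> a ^+ m != 1)
  (hto : (t <= o)%N) :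
  f_at a t %| ('X^o - 1) /\
  forall g : {poly L}, g \is a polyOver 1%VS -> g != 0 -> f_at a t %| g ->
    sparse t g -> (o <= (size g).-1)%N.
Proof.
split.
  rewrite /f_at; apply: prod_dvd; first exact: undup_uniq.
  move=> q; rewrite mem_undup => /mapP [i _ ->]; split; first by exists (a ^+ i).
  apply: minPoly_dvdp; first by rewrite polyOverXnsubC mem1v.
  by rewrite /root !hornerE -exprM mulnC exprM ho expr1n subrr.
move=> g _ g0 fg sp; have H := @part2 _ _ t a o ha ho_min g g0.
apply: H; last exact: sp.
move=> i it.
apply/rootP; apply: (root_dvdp (p := minPoly 1%VS (a ^+ i))); last exact: root_minPoly.
apply: dvdp_trans fg; rewrite /f_at; apply: dvd_mem; rewrite mem_undup; apply: map_f.
by rewrite mem_iota.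
Qed.
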